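(* For every infinite computable set $R\subseteq\mathbb N$, the sequence $\Omega_R$ is captured by a $\mathbf c_{\Omega,R}$-bounded test.
   Context: $\Omega$ is a fixed left-c.e. ML-random real, viewed also as an infinite binary sequence, with a computable increasing sequence of rationals $\Omega_s\to\Omega$ (here $\Omega_s$ for a number $s$ denotes the approximation). For an infinite set $R$, $\Omega_R$ is the sequence obtained from $\Omega$ by deleting the bits at positions outside $R$ (its $m$-th bit is $\Omega(p_R(m))$, $p_R(m)$ the $m$-th element of $R$). Let $k_s(n)=\lfloor-\log_2(\Omega_s-\Omega_n)\rfloor$ and $k(n)=\lfloor-\log_2(\Omega-\Omega_n)\rfloor$. Define $\mathbf c_{\Omega,R}(n,s)=2^{-|R\cap k_s(n)|}$ (where $R\cap m=R\cap\{0,\dots,m-1\}$), a monotonic cost function with limit $\underline{\mathbf c}_{\Omega,R}(n)=2^{-|R\cap k(n)|}$. A $\mathbf c$-bounded test is a nested sequence of uniformly c.e. open sets $V_n\subseteq 2^\omega$ with $\mu(V_n)\le C\,\underline{\mathbf c}(n)$ for some constant $C$; it captures the elements of $\bigcap_nV_n$. *)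

(* Defs.v *)
From Stdlib Require Import Reals List ZArith Arith ClassicalEpsilon.
Import ListNotations.
Open Scope R_scope.

Inductive prog : Type :=
| PZero : prog
| PSucc : prog
| PProj : nat -> prog
| PComp : prog -> list prog -> prog
| PPrec : prog -> prog -> prog
| PMu : prog -> prog.

Inductive eval : prog -> list nat -> nat -> Prop :=
| eZero v : eval PZero v 0
| eSucc x v : eval PSucc (x :: v) (S x)
| eProj i v : (i < length v)%nat -> eval (PProj i) v (nth i v 0%nat)
| eComp f gs v ys y : evals gs v ys -> eval f ys y -> eval (PComp f gs) v y
| ePrec0 f g v y : eval f v y -> eval (PPrec f g) (0%nat :: v) y
| ePrecS f g n v r y :
    eval (PPrec f g) (n :: v) r -> eval g (n :: r :: v) y ->
    eval (PPrec f g) (S n :: v) y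
| eMu f v n :
    eval f (n :: v) 0%nat ->
    (forall m, (m < n)%nat -> exists k, eval f (m :: v) (S k)) ->
    eval (PMu f) v n
with evals : list prog -> list nat -> list nat -> Prop :=
| esNil v : evals [] v []
| esCons g gs v y ys : eval g v y -> evals gs v ys -> evals (g :: gs) v (y :: ys).

Definition computable1 (f : nat -> nat) : Prop :=
  exists p, forall n, eval p [n] (f n).
Definition computable2 (f : nat -> nat -> nat) : Prop :=
  exists p, forall n m, eval p [n; m] (f n m).

Definition computable_set (Rs : nat -> bool) : Prop :=
  computable1 (fun n => if Rs n then 1%nat else 0%nat).

Definition infinite_set (Rs : nat -> bool) : Prop :=
  forall m, exists k, (m <= k)%nat /\ Rs k = true.

Fixpoint pos_bits (p : positive) : list bool :=
  match p with
  | xH => []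
  | xO p' => pos_bits p' ++ [false]
  | xI p' => pos_bits p' ++ [true]
  end.

(** code 0 = no string; code (m+1) = the m-th binary string (bijectively). *)
Definition decode_str (c : nat) : option (list bool) :=
  match c with
  | O => None
  | S m => Some (pos_bits (Pos.of_succ_nat m))
  end.

Definition in_cyl (sigma : list bool) (X : nat -> bool) : Prop :=
  forall i, (i < length sigma)%nat -> X i = nth i sigma false.

(** A sequence of uniformly c.e. open sets is presented by a computable
    g : nat -> nat -> nat; V_n is the union of the cylinders of the strings
    decode_str (g n k), k in nat. *)
Definition in_V (g : nat -> nat -> nat) (n : nat) (X : nat -> bool) : Prop :=
  exists k, match decode_str (g n k) with
            | Some s => in_cyl s X
            | None => False
            end.

Fixpoint stage (g : nat -> nat -> nat) (n k : nat) : list (list bool) :=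
  match k with
  | O => []
  | S k' => match decode_str (g n k') with
            | Some s => s :: stage g n k'
            | None => stage g n k'
            end
  end.

Fixpoint prefixb (s t : list bool) : bool :=
  match s, t with
  | [], _ => true
  | a :: s', b :: t' => Bool.eqb a b && prefixb s' t'
  | _ :: _, [] => false
  end.

Fixpoint all_strings (L : nat) : list (list bool) :=
  match L with
  | O => [[]]
  | S L' => flat_map (fun s => [false :: s; true :: s]) (all_strings L')
  end.

(** Lebesgue measure of the finite union of cylinders [s], s in S *)
Definition measure_fin (S : list (list bool)) : R :=
  let L := fold_right (fun s m => Nat.max (length s) m) 0%nat S in
  INR (length (filter (fun t => existsb (fun s => prefixb s t) S) (all_strings L)))
  / 2 ^ L.

(** mu(V_n) <= b  (measure of an open set = sup of the measures of its
    finite stages) *)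
Definition measure_V_le (g : nat -> nat -> nat) (n : nat) (b : R) : Prop :=
  forall k, measure_fin (stage g n k) <= b.

Definition uniformly_ce (g : nat -> nat -> nat) : Prop := computable2 g.

Definition nested (g : nat -> nat -> nat) : Prop :=
  forall n X, in_V g (S n) X -> in_V g n X.

Definition ML_test (g : nat -> nat -> nat) : Prop :=
  uniformly_ce g /\ forall n, measure_V_le g n (/ 2 ^ n).

Definition ML_random (X : nat -> bool) : Prop :=
  forall g, ML_test g -> ~ (forall n, in_V g n X).

Definition real_of_bits (X : nat -> bool) (r : R) : Prop :=
  infinite_sum (fun i => if X i then / 2 ^ (S i) else 0) r.

Definition computable_rat_seq (q : nat -> R) : Prop :=
  exists a b c : nat -> nat,
    computable1 a /\ computable1 b /\ computable1 c /\
    forall s, q s = (INR (a s) - INR (b s)) / INR (S (c s)).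

Fixpoint cnt (Rs : nat -> bool) (k : nat) : nat :=
  match k with
  | O => O
  | S k' => (cnt Rs k' + if Rs k' then 1 else 0)%nat
  end.

Definition kfun (r : R) (q : nat -> R) (n : nat) : Z :=
  Int_part (- (ln (r - q n) / ln 2)).

(** underline c_{Omega,R}(n) = 2^{-|R ∩ k(n)|}  (R ∩ m = R ∩ {0..m-1},
    empty when m <= 0) *)
Definition cbar (Rs : nat -> bool) (r : R) (q : nat -> R) (n : nat) : R :=
  / 2 ^ (cnt Rs (Z.to_nat (kfun r q n))).

Definition bounded_test (cb : nat -> R) (g : nat -> nat -> nat) : Prop :=
  uniformly_ce g /\ nested g /\
  exists C : R, forall n, measure_V_le g n (C * cb n).

Definition captures (g : nat -> nat -> nat) (X : nat -> bool) : Prop :=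
  forall n, in_V g n X.

(** p_R(m) = the m-th element of R (counting from 0) *)
Definition p_R (Rs : nat -> bool) (m : nat) : nat :=
  epsilon (inhabits 0%nat) (fun k => Rs k = true /\ cnt Rs k = m).

Definition restrict_seq (Rs : nat -> bool) (X : nat -> bool) : nat -> bool :=
  fun m => X (p_R Rs m).

(* Main.v *)
Require Import Defs.
From Stdlib Require Import Reals List ZArith Arith Lia Lra ClassicalEpsilon.
Import ListNotations.
Open Scope nat_scope.

Inductive ex : Type :=
| EVar (i : nat)
| EZero
| ESucc (a : ex)
| EExt (p : prog) (f : nat -> nat) (H : forall n, eval p [n] (f n)) (a : ex)
| EApp1 (f a : ex)
| EApp2 (f a b : ex)
| EApp3 (f a b c : ex)
| ERec (n b s : ex).

Fixpoint den (e : ex) (v : list nat) : nat :=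
  match e with
  | EVar i => nth i v 0%nat
  | EZero => 0%nat
  | ESucc a => S (den a v)
  | EExt _ f _ a => f (den a v)
  | EApp1 f a => den f [den a v]
  | EApp2 f a b => den f [den a v; den b v]
  | EApp3 f a b c => den f [den a v; den b v; den c v]
  | ERec n b s => nat_rec (fun _ => nat) (den b v) (fun i acc => den s (i :: acc :: v)) (den n v)
  end.

Fixpoint wf (k : nat) (e : ex) : bool :=
  match e with
  | EVar i => Nat.ltb i k
  | EZero => true
  | ESucc a => wf k a
  | EExt _ _ _ a => wf k a
  | EApp1 f a => wf 1 f && wf k a
  | EApp2 f a b => wf 2 f && wf k a && wf k b
  | EApp3 f a b c => wf 3 f && wf k a && wf k b && wf k c
  | ERec n b s => wf k n && wf k b && wf (S (S k)) s
  end.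

Fixpoint compile (k : nat) (e : ex) : prog :=
  match e with
  | EVar i => PProj i
  | EZero => PZero
  | ESucc a => PComp PSucc [compile k a]
  | EExt p _ _ a => PComp p [compile k a]
  | EApp1 f a => PComp (compile 1 f) [compile k a]
  | EApp2 f a b => PComp (compile 2 f) [compile k a; compile k b]
  | EApp3 f a b c => PComp (compile 3 f) [compile k a; compile k b; compile k c]
  | ERec n b s => PComp (PPrec (compile k b) (compile (S (S k)) s))
                        (compile k n :: map PProj (seq 0 k))
  end.

Lemma evals_proj : forall v w j,
  (forall i, (i < length w)%nat -> nth (j+i) v 0%nat = nth i w 0%nat) ->
  (j + length w <= length v)%nat ->
  evals (map PProj (seq j (length w))) v w.
Proof.
  intros v w. induction w as [|x w IH]; intros j H1 H2; simpl.
  - constructor.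
  - constructor.
    + replace x with (nth j v 0%nat).
      * constructor. simpl in H2. lia.
      * specialize (H1 0%nat). rewrite Nat.add_0_r in H1. apply H1. simpl; lia.
    + apply IH.
      * intros i Hi. specialize (H1 (S i)). simpl in H1. rewrite <- H1 by lia.
        f_equal. lia.
      * simpl in H2. lia.
Qed.

Lemma evals_id : forall v, evals (map PProj (seq 0 (length v))) v v.
Proof. intros v. apply evals_proj; intros; simpl; auto; lia. Qed.

Lemma compile_ok : forall e k v, wf k e = true -> length v = k ->
  eval (compile k e) v (den e v).
Proof.
  induction e; intros k v Hw Hl; simpl in *.
  - constructor. apply Nat.ltb_lt in Hw. lia.
  - constructor.
  - econstructor. constructor. apply IHe; auto. constructor. constructor.
  - econstructor. constructor. apply IHe; auto. constructor. apply H.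
  - apply Bool.andb_true_iff in Hw as [H1 H2].
    econstructor. constructor. apply IHe2; eauto. constructor. apply IHe1; auto.
  - apply Bool.andb_true_iff in Hw as [Hw H3]. apply Bool.andb_true_iff in Hw as [H1 H2].
    econstructor. constructor. apply IHe2; eauto. constructor. apply IHe3; eauto.
    constructor. apply IHe1; auto.
  - apply Bool.andb_true_iff in Hw as [Hw H4]. apply Bool.andb_true_iff in Hw as [Hw H3].
    apply Bool.andb_true_iff in Hw as [H1 H2].
    econstructor. constructor. apply IHe2; eauto. constructor. apply IHe3; eauto.
    constructor. apply IHe4; eauto. constructor. apply IHe1; auto.
  - apply Bool.andb_true_iff in Hw as [Hw H3]. apply Bool.andb_true_iff in Hw as [H1 H2].
    econstructor. constructor. apply IHe1; eauto. subst k. apply evals_id.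
    generalize (den e1 v). intros m. induction m.
    + constructor. apply IHe2; auto.
    + simpl. econstructor. apply IHm. apply IHe3; auto. simpl. lia.
Qed.

Definition ADD := ERec (EVar 1) (EVar 0) (ESucc (EVar 1)).
Definition PRED := ERec (EVar 0) EZero (EVar 0).
Definition SUB := ERec (EVar 1) (EVar 0) (EApp1 PRED (EVar 1)).
Definition MUL := ERec (EVar 1) EZero (EApp2 ADD (EVar 1) (EVar 2)).
Definition POW2 := ERec (EVar 0) (ESucc EZero) (EApp2 ADD (EVar 1) (EVar 1)).
Definition LE := EApp2 SUB (ESucc EZero) (EApp2 SUB (EVar 0) (EVar 1)).
Definition ODD := ERec (EVar 0) EZero (EApp2 SUB (ESucc EZero) (EVar 1)).
Definition DIV := ERec (EVar 0) EZero
  (EApp2 ADD (EVar 1) (EApp2 LE (EApp2 MUL (ESucc (EVar 0)) (EVar 3)) (EVar 2))).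

Lemma ADD_ok x y : den ADD [x; y] = (x + y)%nat.
Proof. simpl. induction y; simpl; lia. Qed.
Lemma PRED_ok x : den PRED [x] = Nat.pred x.
Proof. destruct x; reflexivity. Qed.
Lemma SUB_ok x y : den SUB [x; y] = (x - y)%nat.
Proof.
  change (nat_rec (fun _ => nat) x (fun i acc => den PRED [acc]) y = (x - y)%nat).
  induction y; cbn [nat_rec nat_rect]. lia. rewrite PRED_ok, IHy. lia.
Qed.
Lemma MUL_ok x y : den MUL [x; y] = (x * y)%nat.
Proof.
  change (nat_rec (fun _ => nat) 0%nat (fun i acc => den ADD [acc; x]) y = (x * y)%nat).
  induction y; cbn [nat_rec nat_rect]. lia. rewrite ADD_ok, IHy. lia.
Qed.
Lemma POW2_ok x : den POW2 [x] = (2 ^ x)%nat.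
Proof.
  change (nat_rec (fun _ => nat) 1%nat (fun i acc => den ADD [acc; acc]) x = (2 ^ x)%nat).
  induction x; cbn [nat_rec nat_rect]. reflexivity. rewrite ADD_ok, IHx. simpl. lia.
Qed.
Lemma LE_ok x y : den LE [x; y] = (if Nat.leb x y then 1 else 0)%nat.
Proof.
  change (den SUB [1; den SUB [x; y]] = (if Nat.leb x y then 1 else 0)%nat).
  rewrite !SUB_ok. destruct (Nat.leb_spec x y); lia.
Qed.
Lemma ODD_ok x : den ODD [x] = (if Nat.odd x then 1 else 0)%nat.
Proof.
  change (nat_rec (fun _ => nat) 0%nat (fun i acc => den SUB [1; acc]) x = (if Nat.odd x then 1 else 0)%nat).
  induction x; cbn [nat_rec nat_rect]. reflexivity. rewrite SUB_ok, IHx, Nat.odd_succ, <- Nat.negb_odd.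
  destruct (Nat.odd x); reflexivity.
Qed.

Lemma count_lt : forall M T,
  nat_rec (fun _ => nat) 0%nat (fun i acc => (acc + if Nat.ltb i T then 1 else 0)%nat) M
  = Nat.min M T.
Proof.
  induction M; intros T; cbn [nat_rec nat_rect]. reflexivity. rewrite IHM.
  destruct (Nat.ltb_spec M T); lia.
Qed.

Lemma DIV_ok x y : (0 < y)%nat -> den DIV [x; y] = (x / y)%nat.
Proof.
  intros Hy.
  change (nat_rec (fun _ => nat) 0%nat
     (fun i acc => den ADD [acc; den LE [den MUL [S i; y]; x]]) x = (x / y)%nat).
  transitivity (nat_rec (fun _ => nat) 0%nat
     (fun i acc => (acc + if Nat.ltb i (x / y) then 1 else 0)%nat) x).
  - assert (HM : forall M, nat_rec (fun _ => nat) 0%nat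
     (fun i acc => den ADD [acc; den LE [den MUL [S i; y]; x]]) M =
     nat_rec (fun _ => nat) 0%nat
     (fun i acc => (acc + if Nat.ltb i (x / y) then 1 else 0)%nat) M).
    { induction M as [|x0 IHx0]; cbn [nat_rec nat_rect]. reflexivity.
    rewrite ADD_ok, LE_ok, MUL_ok, IHx0. f_equal.
    destruct (Nat.leb_spec (S x0 * y) x); destruct (Nat.ltb_spec x0 (x / y)); auto.
    + exfalso. assert (S x0 <= x / y)%nat. apply Nat.div_le_lower_bound; lia. lia.
    + exfalso. assert (S x0 * y <= x / y * y)%nat. apply Nat.mul_le_mono_r; lia.
      assert (x / y * y <= x)%nat. rewrite Nat.mul_comm. apply Nat.Div0.mul_div_le. lia. }
    apply HM.
  - rewrite count_lt. apply Nat.min_r. apply Nat.Div0.div_le_upper_bound. nia.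
Qed.

Definition KC := ERec (EVar 1) EZero (EApp2 ADD (EVar 1)
  (EApp2 LE (EApp2 MUL (EVar 2) (EApp1 POW2 (ESucc (EVar 1)))) (EVar 3))).

Fixpoint kci (P Q t : nat) : nat :=
  match t with
  | 0 => 0
  | S t' => kci P Q t' + (if Nat.leb (P * 2 ^ (S (kci P Q t'))) Q then 1 else 0)
  end.
Definition kc P Q := kci P Q Q.

Lemma KC_ok P Q : den KC [P; Q] = kc P Q.
Proof.
  unfold kc.
  change (nat_rec (fun _ => nat) 0 (fun i acc =>
     den ADD [acc; den LE [den MUL [P; den POW2 [S acc]]; Q]]) Q = kci P Q Q).
  assert (HM : forall t, nat_rec (fun _ => nat) 0 (fun i acc =>
     den ADD [acc; den LE [den MUL [P; den POW2 [S acc]]; Q]]) t = kci P Q t).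
  { intros t. induction t; cbn [nat_rec nat_rect]. reflexivity.
  rewrite ADD_ok, LE_ok, MUL_ok, POW2_ok, IHt. reflexivity. }
  apply HM.
Qed.

Definition STR pr rc Hr := ERec (EVar 0) (ESucc EZero)
  (EApp2 ADD (EVar 1) (EApp2 MUL (EExt pr rc Hr (EVar 0))
     (EApp2 ADD (EVar 1) (EApp1 ODD (EApp2 DIV (EVar 3)
        (EApp1 POW2 (EApp2 SUB (EVar 2) (ESucc (EVar 0))))))))).

Fixpoint sci (rc : nat -> nat) (K N j : nat) : nat :=
  match j with
  | 0 => 1
  | S j' => sci rc K N j' + rc j' * (sci rc K N j' +
              (if Nat.odd (N / 2 ^ (K - S j')) then 1 else 0))
  end.

Lemma STR_ok pr rc Hr K N : den (STR pr rc Hr) [K; N] = sci rc K N K.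
Proof.
  change (nat_rec (fun _ => nat) 1 (fun i acc =>
     den ADD [acc; den MUL [rc i; den ADD [acc; den ODD [den DIV [N; den POW2 [den SUB [K; S i]]]]]]]) K = sci rc K N K).
  assert (HM : forall t, nat_rec (fun _ => nat) 1 (fun i acc =>
     den ADD [acc; den MUL [rc i; den ADD [acc; den ODD [den DIV [N; den POW2 [den SUB [K; S i]]]]]]]) t = sci rc K N t).
  { intros t. induction t; cbn [nat_rec nat_rect]. reflexivity.
  rewrite ADD_ok, MUL_ok, ADD_ok, ODD_ok, DIV_ok, POW2_ok, SUB_ok, IHt. reflexivity.
  rewrite POW2_ok. apply Nat.neq_0_lt_0. apply Nat.pow_nonzero. lia. }
  apply HM.
Qed.

Definition enc (l : list bool) : nat := fold_left (fun c b => 2 * c + Nat.b2n b) l 1.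
Definition encp (l : list bool) : positive :=
  fold_left (fun p (b : bool) => if b then xI p else xO p) l xH.

Lemma enc_app l b : enc (l ++ [b]) = 2 * enc l + Nat.b2n b.
Proof. unfold enc. rewrite fold_left_app. reflexivity. Qed.

Lemma encp_spec l : pos_bits (encp l) = l /\ Pos.to_nat (encp l) = enc l.
Proof.
  induction l as [|b l IH] using rev_ind.
  - simpl. auto.
  - unfold encp in *. rewrite fold_left_app. rewrite enc_app. destruct IH as [H1 H2].
    destruct b; simpl.
    + rewrite H1. split; auto. rewrite Pos2Nat.inj_xI. rewrite H2. simpl. lia.
    + rewrite H1. split; auto. rewrite Pos2Nat.inj_xO. rewrite H2. simpl. lia.
Qed.

Lemma enc_pos l : 0 < enc l.
Proof. destruct (encp_spec l) as [_ H]. rewrite <- H. apply Pos2Nat.is_pos. Qed.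

Lemma decode_enc l : decode_str (enc l) = Some l.
Proof.
  destruct (encp_spec l) as [H1 H2]. destruct (enc l) eqn:E.
  - pose proof (enc_pos l). lia.
  - simpl. f_equal. rewrite (SuccNat2Pos.inv n (encp l)); auto.
Qed.

Section Strl.
Variable Rs : nat -> bool.
Fixpoint strl (K N : nat) : list bool :=
  match K with
  | 0 => []
  | S K' => strl K' (N / 2) ++ (if Rs K' then [Nat.odd N] else [])
  end.

Lemma sci_ok K N j : j <= K ->
  sci (fun n => if Rs n then 1 else 0) K N j = enc (strl j (N / 2 ^ (K - j))).
Proof.
  induction j; intros Hj. reflexivity.
  cbn [sci strl]. rewrite IHj by lia.
  assert (Hd : N / 2 ^ (K - S j) / 2 = N / 2 ^ (K - j)).
  { rewrite Nat.Div0.div_div. f_equal. replace (K - j) with (S (K - S j)) by lia.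
    simpl. lia. }
  rewrite Hd.
  destruct (Rs j).
  + rewrite enc_app. destruct (Nat.odd (N / 2 ^ (K - S j))); unfold Nat.b2n; lia.
  + rewrite app_nil_r. lia.
Qed.

Lemma sci_strl K N : sci (fun n => if Rs n then 1 else 0) K N K = enc (strl K N).
Proof. rewrite sci_ok by lia. rewrite Nat.sub_diag, Nat.pow_0_r, Nat.div_1_r. auto. Qed.

End Strl.

Lemma length_all L : length (all_strings L) = 2 ^ L.
Proof.
  induction L; simpl. reflexivity.
  assert (H : forall l : list (list bool), length (flat_map (fun s => [false :: s; true :: s]) l) = 2 * length l).
  { induction l; simpl. reflexivity. rewrite IHl. lia. }
  rewrite H, IHL. lia.
Qed.

Lemma filter_true_len {A} (l : list A) p : (forall x, p x = true) -> length (filter p l) = length l.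
Proof. intros H. induction l; simpl. auto. rewrite H. simpl. auto. Qed.

Lemma cnt_pref : forall L u, length (filter (prefixb u) (all_strings L)) * 2 ^ length u <= 2 ^ L.
Proof.
  induction L; intros u.
  - destruct u; simpl; lia.
  - destruct u as [|c u'].
    + rewrite filter_true_len by reflexivity. rewrite length_all. simpl. lia.
    + assert (H : forall l : list (list bool), length (filter (prefixb (c :: u'))
          (flat_map (fun s => [false :: s; true :: s]) l)) = length (filter (prefixb u') l)).
      { induction l as [|x l IH]; simpl. reflexivity.
        destruct c; simpl; destruct (prefixb u' x); simpl; rewrite ?IH; auto. }
      simpl all_strings. rewrite H. specialize (IHL u'). simpl length. simpl Nat.pow. lia.
Qed.

Definition sumR (U : list (list bool)) : R :=
  fold_right (fun u a => (/ 2 ^ length u + a)%R) 0%R U.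

Lemma union_bound : forall (U : list (list bool)) (l : list (list bool)),
  length (filter (fun t => existsb (fun u => prefixb u t) U) l) <=
  fold_right (fun u acc => length (filter (prefixb u) l) + acc) 0 U.
Proof.
  induction U as [|u U IH]; intros l; simpl.
  - induction l; simpl; auto.
  - specialize (IH l). assert (H : forall l0 : list (list bool),
      length (filter (fun t => orb (prefixb u t) (existsb (fun u0 => prefixb u0 t) U)) l0) <=
      length (filter (prefixb u) l0) + length (filter (fun t => existsb (fun u0 => prefixb u0 t) U) l0)).
    { induction l0; simpl. lia. destruct (prefixb u a); destruct (existsb _ U); simpl; lia. }
    specialize (H l). lia.
Qed.

Lemma filter_mono {A} (p p' : A -> bool) l : (forall x, p x = true -> p' x = true) ->
  length (filter p l) <= length (filter p' l).
Proof.
  intros H. induction l; simpl. lia.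
  destruct (p a) eqn:E. rewrite (H a E). simpl. lia. destruct (p' a); simpl; lia.
Qed.

Lemma sum_bound : forall (U : list (list bool)) L,
  (INR (fold_right (fun u acc => (length (filter (prefixb u) (all_strings L)) + acc)%nat) 0%nat U) / 2 ^ L
  <= sumR U)%R.
Proof.
  induction U as [|u U IH]; intros L; simpl.
  - unfold Rdiv. rewrite Rmult_0_l. apply Rle_refl.
  - rewrite plus_INR. unfold Rdiv. rewrite Rmult_plus_distr_r.
    apply Rplus_le_compat; [|apply IH].
    pose proof (cnt_pref L u) as H. apply le_INR in H. rewrite mult_INR, !pow_INR in H.
    simpl INR in H.
    assert (0 < 2 ^ length u)%R by (apply pow_lt; lra).
    assert (0 < 2 ^ L)%R by (apply pow_lt; lra).
    apply (Rmult_le_reg_r (2 ^ L * 2 ^ length u)). apply Rmult_lt_0_compat; lra.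
    replace (INR (length (filter (prefixb u) (all_strings L))) * / 2 ^ L * (2 ^ L * 2 ^ length u))%R
      with (INR (length (filter (prefixb u) (all_strings L))) * 2 ^ length u)%R by (field; lra).
    replace (/ 2 ^ length u * (2 ^ L * 2 ^ length u))%R with (2 ^ L)%R by (field; lra).
    exact H.
Qed.

Lemma MF : forall S U, (forall s, In s S -> In s U) -> (measure_fin S <= sumR U)%R.
Proof.
  intros S U HS. unfold measure_fin.
  set (L := fold_right (fun s m => Nat.max (length s) m) 0 S).
  eapply Rle_trans; [|apply (sum_bound U L)].
  unfold Rdiv. apply Rmult_le_compat_r.
  - left. apply Rinv_0_lt_compat. apply pow_lt; lra.
  - apply le_INR. eapply Nat.le_trans; [|apply union_bound].
    apply filter_mono. intros t Ht. apply existsb_exists in Ht as [s [Hs1 Hs2]].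
    apply existsb_exists. exists s. auto.
Qed.

Fixpoint econst (c : nat) : ex := match c with 0 => EZero | S c' => ESucc (econst c') end.
Lemma econst_den c v : den (econst c) v = c.
Proof. induction c; simpl; auto. Qed.
Lemma econst_wf c k : wf k (econst c) = true.
Proof. induction c; simpl; auto. Qed.

Lemma stage_in : forall g n k s, In s (stage g n k) ->
  exists j, j < k /\ decode_str (g n j) = Some s.
Proof.
  intros g n k. induction k; intros s H; simpl in H. destruct H.
  destruct (decode_str (g n k)) eqn:E.
  - destruct H as [H|H].
    + subst. exists k. auto.
    + destruct (IHk s H) as [j [H1 H2]]. exists j. split; auto.
  - destruct (IHk s H) as [j [H1 H2]]. exists j. split; auto.
Qed.

Lemma not_ev_const (Omega : nat -> bool) : ML_random Omega ->
  forall N b, exists i, N <= i /\ Omega i <> b.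
Proof.
  intros HML N b. apply Classical_Prop.NNPP. intros Hc.
  assert (Hb : forall i, N <= i -> Omega i = b).
  { intros i Hi. destruct (Bool.bool_dec (Omega i) b); auto. exfalso. apply Hc. eauto. }
  clear Hc.
  set (P := map Omega (seq 0 N)).
  set (u := fun n => P ++ repeat b n).
  set (E := ERec (EVar 0) (econst (enc P))
             (EApp2 ADD (EApp2 ADD (EVar 1) (EVar 1)) (econst (Nat.b2n b)))).
  assert (HE : forall n k, den E [n; k] = enc (u n)).
  { intros n k. unfold E.
    change (nat_rec (fun _ => nat) (den (econst (enc P)) [n; k])
      (fun i acc => den ADD [den ADD [acc; acc]; den (econst (Nat.b2n b)) [i; acc; n; k]]) n
      = enc (u n)).
    rewrite econst_den.
    assert (HM : forall m, nat_rec (fun _ => nat) (enc P)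
      (fun i acc => den ADD [den ADD [acc; acc]; den (econst (Nat.b2n b)) [i; acc; n; k]]) m
      = enc (u m)).
    { induction m; cbn [nat_rec nat_rect].
    - unfold u. simpl. rewrite app_nil_r. auto.
    - rewrite !ADD_ok, econst_den, IHm.
      unfold u. simpl repeat. rewrite repeat_cons, app_assoc, enc_app. lia. }
    apply HM. }
  apply (HML (fun n k => enc (u n))).
  - split.
    + exists (compile 2 E). intros n m. rewrite <- (HE n m). apply compile_ok; auto.
      simpl. rewrite !econst_wf. reflexivity.
    + intros n k. eapply Rle_trans. apply (MF _ [u n]).
      * intros s Hs. apply stage_in in Hs as [j [_ Hj]]. rewrite decode_enc in Hj.
        inversion Hj. simpl. auto.
      * simpl. rewrite Rplus_0_r. unfold u. rewrite length_app, repeat_length.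
        unfold P. rewrite length_map, length_seq. apply Rinv_le_contravar.
        apply pow_lt; lra. apply Rle_pow. lra. lia.
  - intros n. exists 0. rewrite decode_enc. intros i Hi. unfold u in *.
    rewrite length_app, repeat_length in Hi. unfold P in *. rewrite length_map, length_seq in Hi.
    destruct (Nat.lt_ge_cases i N).
    + rewrite app_nth1 by (rewrite length_map, length_seq; auto).
      rewrite (nth_indep _ false (Omega 0)) by (rewrite length_map, length_seq; auto).
      rewrite map_nth, seq_nth; auto.
    + rewrite app_nth2 by (rewrite length_map, length_seq; auto).
      rewrite nth_repeat_lt by (rewrite length_map, length_seq; lia). auto.
Qed.

Open Scope R_scope.

Lemma ln_le0 y : 0 < y -> (ln y <= 0 <-> y <= 1).
Proof.
  intros Hy. split; intros H.
  - destruct (Rle_lt_dec y 1); auto. exfalso.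
    pose proof (ln_increasing 1 y ltac:(lra) r). rewrite ln_1 in H0. lra.
  - destruct H. pose proof (ln_increasing y 1 Hy H). rewrite ln_1 in H0. lra.
    subst. rewrite ln_1. lra.
Qed.

Lemma ln2_pos : 0 < ln 2.
Proof. pose proof ln_lt_2. lra. Qed.

Lemma ln_d2 d m : 0 < d -> ln (d * 2 ^ m) = ln d + INR m * ln 2.
Proof. intros Hd. rewrite ln_mult, ln_pow; auto; try lra. apply pow_lt; lra. Qed.

Lemma kfun_prop d : 0 < d ->
  let K := Z.to_nat (Int_part (- (ln d / ln 2))) in
  (K = 0%nat \/ d * 2 ^ K <= 1) /\ 1 < d * 2 ^ (S K).
Proof.
  intros Hd K. pose proof ln2_pos as H2.
  set (x := - (ln d / ln 2)) in *.
  destruct (base_Int_part x) as [B1 B2]. set (z := Int_part x) in *.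
  assert (Hx : forall m : nat, (d * 2 ^ m <= 1 <-> INR m <= x)).
  { intros m. rewrite <- ln_le0 by (apply Rmult_lt_0_compat; auto; apply pow_lt; lra).
    rewrite ln_d2 by auto. unfold x. split; intros H.
    - apply (Rmult_le_reg_r (ln 2)); auto. unfold Rdiv. field_simplify; lra.
    - apply (Rmult_le_compat_r (ln 2)) in H; [|lra]. unfold Rdiv in H. field_simplify in H; lra. }
  split.
  - destruct (Z_lt_le_dec z 1).
    + left. unfold K. fold z. lia.
    + right. apply Hx. unfold K. fold z. rewrite INR_IZR_INZ, Z2Nat.id by lia. auto.
  - destruct (Rlt_le_dec 1 (d * 2 ^ S K)); auto. exfalso.
    apply Hx in r. rewrite S_INR in r. unfold K in r. fold z in r.
    destruct (Z_lt_le_dec z 0).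
    + replace (Z.to_nat z) with 0%nat in r by lia. simpl in r.
      assert (IZR z <= -1). { apply IZR_le. lia. } lra.
    + rewrite INR_IZR_INZ, Z2Nat.id in r by lia. lra.
Qed.

Fixpoint psum (h : nat -> R) (m : nat) : R :=
  match m with 0%nat => 0 | S m' => psum h m' + h m' end.

Lemma sum_psum h n : sum_f_R0 h n = psum h (S n).
Proof. induction n; simpl. lra. rewrite IHn. simpl. auto. Qed.

Lemma psum_ge h K j t : (forall i, 0 <= h i) -> (K <= j < K + t)%nat ->
  psum h (K + t) - psum h K >= h j.
Proof.
  intros H0 Hj. induction t. exfalso; lia.
  rewrite Nat.add_succ_r. simpl. destruct (Nat.eq_dec j (K + t)).
  - subst. assert (psum h (K + t) - psum h K >= 0).
    { clear Hj IHt. induction t. rewrite Nat.add_0_r. lra. rewrite Nat.add_succ_r. simpl.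
      specialize (H0 (K + t)%nat). lra. }
    lra.
  - specialize (IHt ltac:(lia)). specialize (H0 (K+t)%nat). lra.
Qed.

Lemma psum_geom K t : psum (fun i => / 2 ^ S i) (K + t) - psum (fun i => / 2 ^ S i) K
  = / 2 ^ K - / 2 ^ (K + t).
Proof.
  induction t. rewrite Nat.add_0_r. lra.
  rewrite Nat.add_succ_r. cbn [psum].
  replace (psum (fun i => / 2 ^ S i) (K + t) + / 2 ^ S (K + t) - psum (fun i => / 2 ^ S i) K)
    with ((psum (fun i => / 2 ^ S i) (K + t) - psum (fun i => / 2 ^ S i) K) + / 2 ^ S (K + t)) by ring.
  rewrite IHt.
  simpl. rewrite pow_add.
  assert (0 < 2 ^ K) by (apply pow_lt; lra). assert (0 < 2 ^ t) by (apply pow_lt; lra).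
  field. lra.
Qed.

Lemma psum_minus h1 h2 m : psum (fun i => h1 i - h2 i) m = psum h1 m - psum h2 m.
Proof. induction m; simpl. lra. rewrite IHm. lra. Qed.

Section Bits.
Variable Omega : nat -> bool.
Fixpoint VB (K : nat) : nat :=
  match K with 0%nat => 0%nat | S K' => (2 * VB K' + Nat.b2n (Omega K'))%nat end.
Definition fb i := if Omega i then / 2 ^ S i else 0.

Lemma psum_VB K : psum fb K = INR (VB K) / 2 ^ K.
Proof.
  induction K; cbn [psum VB]. simpl; lra. rewrite IHK. unfold fb.
  rewrite plus_INR, mult_INR. assert (0 < 2 ^ K) by (apply pow_lt; lra).
  destruct (Omega K); simpl; field; lra.
Qed.

Lemma lim_ge (u : nat -> R) l c N : Un_cv u l -> (forall n, (n >= N)%nat -> u n >= c) -> l >= c.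
Proof.
  intros Hu Hc. destruct (Rlt_le_dec l c); [|lra]. exfalso.
  destruct (Hu (c - l) ltac:(lra)) as [N1 HN1]. specialize (HN1 (Nat.max N N1) ltac:(lia)).
  specialize (Hc (Nat.max N N1) ltac:(lia)). unfold Rdist in HN1.
  apply Rabs_def2 in HN1. lra.
Qed.

Lemma lim_le (u : nat -> R) l c N : Un_cv u l -> (forall n, (n >= N)%nat -> u n <= c) -> l <= c.
Proof.
  intros Hu Hc. destruct (Rlt_le_dec c l); [|lra]. exfalso.
  destruct (Hu (l - c) ltac:(lra)) as [N1 HN1]. specialize (HN1 (Nat.max N N1) ltac:(lia)).
  specialize (Hc (Nat.max N N1) ltac:(lia)). unfold Rdist in HN1.
  apply Rabs_def2 in HN1. lra.
Qed.

Lemma bits_bounds r : real_of_bits Omega r ->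
  (forall N b, exists i, (N <= i)%nat /\ Omega i <> b) ->
  forall K, INR (VB K) / 2 ^ K < r < (INR (VB K) + 1) / 2 ^ K.
Proof.
  intros Hr Hne K. assert (Hu : Un_cv (fun n => psum fb (S n)) r).
  { intros e He. destruct (Hr e He) as [N HN]. exists N. intros n Hn.
    rewrite <- sum_psum. apply HN; auto. }
  assert (Hpos : forall i, 0 <= fb i).
  { intros i. unfold fb. destruct (Omega i). left. apply Rinv_0_lt_compat, pow_lt; lra. lra. }
  split.
  - destruct (Hne K false) as [j [Hj1 Hj2]]. apply Bool.not_false_is_true in Hj2.
    assert (r >= INR (VB K) / 2 ^ K + / 2 ^ S j).
    { apply (lim_ge _ _ _ j Hu). intros n Hn.
      pose proof (psum_ge fb K j (S n - K) Hpos ltac:(lia)).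
      replace (K + (S n - K))%nat with (S n) in H by lia.
      rewrite (psum_VB K) in H. assert (fb j = / 2 ^ S j) as E by (unfold fb; rewrite Hj2; auto). rewrite E in H. lra. }
    assert (0 < / 2 ^ S j) by (apply Rinv_0_lt_compat, pow_lt; lra). lra.
  - destruct (Hne K true) as [j [Hj1 Hj2]]. apply Bool.not_true_is_false in Hj2.
    set (h := fun i => / 2 ^ S i - fb i).
    assert (Hh : forall i, 0 <= h i).
    { intros i. unfold h, fb. destruct (Omega i). lra.
      assert (0 < / 2 ^ S i) by (apply Rinv_0_lt_compat, pow_lt; lra). lra. }
    assert (r <= INR (VB K) / 2 ^ K + / 2 ^ K - / 2 ^ S j).
    { apply (lim_le _ _ _ j Hu). intros n Hn.
      pose proof (psum_ge h K j (S n - K) Hh ltac:(lia)).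
      replace (K + (S n - K))%nat with (S n) in H by lia.
      unfold h in H. rewrite !psum_minus in H.
      pose proof (psum_geom K (S n - K)).
      replace (K + (S n - K))%nat with (S n) in H0 by lia.
      rewrite (psum_VB K) in H. assert (fb j = 0) as E by (unfold fb; rewrite Hj2; auto). rewrite E in H.
      assert (0 < / 2 ^ (S n)) by (apply Rinv_0_lt_compat, pow_lt; lra). lra. }
    assert (0 < / 2 ^ S j) by (apply Rinv_0_lt_compat, pow_lt; lra).
    unfold Rdiv in *. lra.
Qed.
End Bits.

Section CntLemmas.
Local Open Scope nat_scope.
Variable Rs : nat -> bool.

Lemma cnt_mono : forall k k', (k <= k')%nat -> (cnt Rs k <= cnt Rs k')%nat.
Proof. intros k k' H. induction H. lia. simpl. lia. Qed.

Lemma cnt_R : forall k k', Rs k = true -> (k < k')%nat -> (S (cnt Rs k) <= cnt Rs k')%nat.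
Proof.
  intros k k' Hk H. assert (cnt Rs (S k) = S (cnt Rs k)) by (simpl; rewrite Hk; lia).
  pose proof (cnt_mono (S k) k' H). lia.
Qed.

Lemma p_R_cnt k : Rs k = true -> p_R Rs (cnt Rs k) = k.
Proof.
  intros Hk. unfold p_R.
  destruct (epsilon_spec (inhabits 0%nat) (fun k0 => Rs k0 = true /\ cnt Rs k0 = cnt Rs k)
     (ex_intro _ k (conj Hk eq_refl))) as [H1 H2].
  set (e := epsilon _ _) in *.
  destruct (Nat.lt_total e k) as [H|[H|H]]; auto.
  - pose proof (cnt_R _ _ H1 H). lia.
  - pose proof (cnt_R _ _ Hk H). lia.
Qed.

Lemma strl_length : forall K N, length (strl Rs K N) = cnt Rs K.
Proof.
  induction K; intros N; simpl. auto. rewrite length_app, IHK. destruct (Rs K); simpl; lia.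
Qed.

Lemma strl_prefix : forall t K N, exists rest, strl Rs (K + t) N = strl Rs K (N / 2 ^ t) ++ rest.
Proof.
  induction t; intros K N.
  - exists []. rewrite Nat.add_0_r, app_nil_r. rewrite Nat.pow_0_r, Nat.div_1_r. auto.
  - rewrite Nat.add_succ_r. cbn [strl]. destruct (IHt K (N / 2)) as [rest H].
    rewrite H. rewrite Nat.Div0.div_div. exists (rest ++ (if Rs (K + t) then [Nat.odd N] else [])).
    rewrite app_assoc. f_equal.
Qed.

Lemma strl_same : forall t K N, cnt Rs (K + t) = cnt Rs K -> strl Rs (K + t) N = strl Rs K (N / 2 ^ t).
Proof.
  intros t K N H. destruct (strl_prefix t K N) as [rest E]. rewrite E.
  assert (length rest = 0%nat).
  { apply (f_equal (@length bool)) in E. rewrite length_app, !strl_length in E. lia. }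
  destruct rest; simpl in *; try lia. rewrite app_nil_r. auto.
Qed.

Lemma cnt_unb : infinite_set Rs -> forall m, exists K, (m <= cnt Rs K)%nat.
Proof.
  intros Hinf m. induction m. exists 0%nat. lia.
  destruct IHm as [K HK]. destruct (Hinf K) as [k [Hk1 Hk2]]. exists (S k).
  simpl. rewrite Hk2. pose proof (cnt_mono K k Hk1). lia.
Qed.

Lemma cnt_ivt : forall K m, (m <= cnt Rs K)%nat -> exists J, (J <= K)%nat /\ cnt Rs J = m.
Proof.
  induction K; intros m H. exists 0%nat. simpl in *. split; lia.
  destruct (Nat.eq_dec m (cnt Rs (S K))). exists (S K). split; auto.
  destruct (IHK m) as [J [H1 H2]]. simpl in H, n. destruct (Rs K); lia.
  exists J. split; auto.
Qed.

Lemma least_ex (P : nat -> Prop) : (exists n, P n) -> exists n, P n /\ forall m, P m -> (n <= m)%nat.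
Proof.
  intros [n Hn]. apply Classical_Prop.NNPP. intros Hc.
  assert (forall k, forall j, (j <= k)%nat -> ~ P j).
  { induction k; intros j Hj Pj.
    - apply Hc. exists j. split; auto. intros. lia.
    - apply Hc. exists j. split; auto. intros m Pm. destruct (Nat.le_gt_cases j m); auto.
      exfalso. apply (IHk m). lia. auto. }
  apply (H n n); auto.
Qed.

Definition Jm (m : nat) : nat :=
  epsilon (inhabits 0%nat) (fun J => cnt Rs J = m /\ forall J', cnt Rs J' = m -> (J <= J')%nat).

Lemma Jm_spec : infinite_set Rs -> forall m,
  cnt Rs (Jm m) = m /\ forall J', cnt Rs J' = m -> (Jm m <= J')%nat.
Proof.
  intros Hinf m. unfold Jm. apply epsilon_spec.
  destruct (cnt_unb Hinf m) as [K HK]. destruct (cnt_ivt K m HK) as [J [_ HJ]].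
  apply least_ex. eauto.
Qed.

End CntLemmas.

Lemma kci_mono P Q : forall t t', (t <= t')%nat -> (kci P Q t <= kci P Q t')%nat.
Proof. intros t t' H. induction H. lia. simpl. lia. Qed.

Lemma kc_prop P Q : (1 <= P)%nat ->
  (kc P Q = 0%nat \/ (P * 2 ^ kc P Q <= Q)%nat) /\ (Q < P * 2 ^ S (kc P Q))%nat.
Proof.
  intros HP. unfold kc. split.
  - assert (HA : forall t, kci P Q t = 0%nat \/ (P * 2 ^ kci P Q t <= Q)%nat).
    { intros t. induction t. left. reflexivity.
      cbn [kci]. destruct (Nat.leb_spec (P * 2 ^ S (kci P Q t)) Q).
      + right. rewrite Nat.add_1_r. auto.
      + rewrite Nat.add_0_r. auto. }
    apply HA.
  - destruct (Nat.lt_ge_cases Q (P * 2 ^ S (kci P Q Q))) as [H|H]; auto. exfalso.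
    assert (forall t, (t <= Q)%nat -> kci P Q t = t).
    { induction t; intros Ht. reflexivity. cbn [kci]. rewrite IHt by lia.
      destruct (Nat.leb_spec (P * 2 ^ S t) Q). lia. exfalso.
      pose proof (kci_mono P Q t Q ltac:(lia)). rewrite IHt in H1 by lia.
      assert (2 ^ S t <= 2 ^ S (kci P Q Q))%nat by (apply Nat.pow_le_mono_r; lia).
      nia. }
    rewrite H0 in H by lia. assert (Q < 2 ^ Q)%nat by (apply Nat.pow_gt_lin_r; lia). rewrite Nat.pow_succ_r' in H.
    nia.
Qed.

Lemma INR_sub_max x y : INR (x - y) = Rmax 0 (INR x - INR y).
Proof.
  destruct (Nat.le_gt_cases y x).
  - rewrite minus_INR by auto. apply le_INR in H. rewrite Rmax_right; lra.
  - replace (x - y)%nat with 0%nat by lia. apply lt_INR in H. rewrite Rmax_left; simpl; lra.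
Qed.

Lemma floor_div M D : (0 < D)%nat ->
  INR (M / D) <= INR M / INR D < INR (M / D) + 1.
Proof.
  intros HD. pose proof (Nat.div_mod_eq M D). pose proof (Nat.mod_upper_bound M D ltac:(lia)).
  assert (0 < INR D) by (apply lt_0_INR; lia).
  set (qq := (M / D)%nat) in *. set (rr := (M mod D)%nat) in *.
  assert (INR M = INR D * INR qq + INR rr) by (rewrite H; rewrite plus_INR, mult_INR; auto).
  apply lt_INR in H0. assert (0 <= INR rr) by apply pos_INR.
  split.
  - apply (Rmult_le_reg_r (INR D)); auto. unfold Rdiv. rewrite Rmult_assoc, Rinv_l by lra. nra.
  - apply (Rmult_lt_reg_r (INR D)); auto. unfold Rdiv. rewrite Rmult_assoc, Rinv_l by lra. nra.
Qed.

Lemma Kle d d' K k : 0 < d -> (K = 0%nat \/ d' * 2 ^ K <= 1) -> d <= d' -> 1 < d * 2 ^ S k ->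
  (K <= k)%nat.
Proof.
  intros Hd H1 H2 H3. destruct (Nat.le_gt_cases K k); auto. exfalso.
  destruct H1 as [H1|H1]. lia.
  assert (2 ^ S k <= 2 ^ K) by (apply Rle_pow; [lra|lia]).
  assert (0 < 2 ^ S k) by (apply pow_lt; lra).
  assert (d * 2 ^ S k <= d' * 2 ^ K) by (apply Rmult_le_compat; lra).
  lra.
Qed.

Lemma int_eq (x y : nat) : INR x < INR y + 1 -> INR y < INR x + 1 -> x = y.
Proof.
  intros H1 H2. rewrite <- S_INR in *. apply INR_lt in H1. apply INR_lt in H2. lia.
Qed.

Section Main.
Variables (a b c : nat -> nat) (Rs : nat -> bool).
Definition qq s := (INR (a s) - INR (b s)) / INR (S (c s)).
Definition Cn s := S (c s).
Definition Xv n s := (a s * Cn n + b n * Cn s)%nat.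
Definition Yv n s := (a n * Cn s + b s * Cn n)%nat.
Definition condb n s := andb (Nat.leb (S n) s) (Nat.leb (S (Yv n s)) (Xv n s)).
Definition Pv n s := (Xv n s - Yv n s)%nat.
Definition Qv n s := (Cn s * Cn n)%nat.
Definition Ks n s := kc (Pv n s) (Qv n s).
Definition Nf s K := ((a s - b s) * 2 ^ K / Cn s)%nat.
Definition gval n s := if condb n s then enc (strl Rs (Ks n s) (Nf s (Ks n s))) else 0%nat.

Lemma INR2 : INR 2 = 2.
Proof. simpl. lra. Qed.

Lemma Cn_pos s : 0 < INR (Cn s).
Proof. apply lt_0_INR. unfold Cn. lia. Qed.

Lemma key_ineq n s : (Yv n s < Xv n s)%nat <-> qq n < qq s.
Proof.
  unfold Yv, Xv, qq. pose proof (Cn_pos n). pose proof (Cn_pos s). fold (Cn n) (Cn s).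
  split; intros H1.
  - apply lt_INR in H1. rewrite !plus_INR, !mult_INR in H1.
    apply (Rmult_lt_reg_r (INR (Cn n) * INR (Cn s))). nra.
    unfold Rdiv. field_simplify; try lra.
  - apply INR_lt. rewrite !plus_INR, !mult_INR.
    apply (Rmult_lt_compat_r (INR (Cn n) * INR (Cn s))) in H1; [|nra].
    unfold Rdiv in H1. field_simplify in H1; try lra.
Qed.

Lemma cond_iff n s : condb n s = true <-> (n < s)%nat /\ qq n < qq s.
Proof.
  unfold condb. rewrite Bool.andb_true_iff, !Nat.leb_le, <- key_ineq. lia.
Qed.

Lemma d_eq n s : condb n s = true -> qq s - qq n = INR (Pv n s) / INR (Qv n s).
Proof.
  intros H. apply cond_iff in H as [_ H]. apply key_ineq in H.
  unfold Pv, Qv, qq. rewrite minus_INR by lia. unfold Xv, Yv.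
  pose proof (Cn_pos n). pose proof (Cn_pos s). fold (Cn n) (Cn s).
  rewrite !plus_INR, !mult_INR. field. lra.
Qed.

Lemma Ks_prop n s : condb n s = true ->
  (Ks n s = 0%nat \/ (qq s - qq n) * 2 ^ Ks n s <= 1) /\ 1 < (qq s - qq n) * 2 ^ S (Ks n s).
Proof.
  intros H. pose proof (d_eq n s H) as E. apply cond_iff in H as [_ H]. apply key_ineq in H.
  assert (HP : (1 <= Pv n s)%nat) by (unfold Pv; lia).
  destruct (kc_prop _ (Qv n s) HP) as [H1 H2]. fold (Ks n s) in H1, H2.
  assert (HQ : 0 < INR (Qv n s)) by (apply lt_0_INR; unfold Qv, Cn; lia).
  rewrite E. split.
  - destruct H1 as [H1|H1]; [left; auto|right].
    apply le_INR in H1. rewrite mult_INR, pow_INR in H1. rewrite INR2 in H1.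
    apply (Rmult_le_reg_r (INR (Qv n s))); auto. unfold Rdiv.
    replace (INR (Pv n s) * / INR (Qv n s) * 2 ^ Ks n s * INR (Qv n s))
      with (INR (Pv n s) * 2 ^ Ks n s) by (field; lra). lra.
  - apply lt_INR in H2. rewrite mult_INR, pow_INR in H2. rewrite INR2 in H2.
    apply (Rmult_lt_reg_r (INR (Qv n s))); auto. unfold Rdiv.
    replace (INR (Pv n s) * / INR (Qv n s) * 2 ^ S (Ks n s) * INR (Qv n s))
      with (INR (Pv n s) * 2 ^ S (Ks n s)) by (field; lra). lra.
Qed.

Lemma Nf_floor s K : INR (Nf s K) <= Rmax 0 (qq s) * 2 ^ K < INR (Nf s K) + 1.
Proof.
  unfold Nf. pose proof (floor_div ((a s - b s) * 2 ^ K) (Cn s) ltac:(unfold Cn; lia)) as H.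
  replace (INR ((a s - b s) * 2 ^ K) / INR (Cn s)) with (Rmax 0 (qq s) * 2 ^ K) in H; auto.
  rewrite mult_INR, pow_INR, INR_sub_max, INR2. unfold qq. fold (Cn s).
  pose proof (Cn_pos s). unfold Rmax.
  destruct (Rle_dec 0 ((INR (a s) - INR (b s)) / INR (Cn s)));
  destruct (Rle_dec 0 (INR (a s) - INR (b s))).
  - field. lra.
  - exfalso. apply n. unfold Rdiv in r. apply Rmult_le_reg_r with (/ INR (Cn s)).
    apply Rinv_0_lt_compat; lra. lra.
  - exfalso. apply n. unfold Rdiv. apply Rmult_le_pos; auto. left. apply Rinv_0_lt_compat; lra.
  - field. lra.
Qed.

Lemma Nf_div s K t : (Nf s (K + t) / 2 ^ t = Nf s K)%nat.
Proof.
  unfold Nf. rewrite Nat.Div0.div_div. rewrite Nat.pow_add_r, Nat.mul_assoc.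
  apply Nat.Div0.div_mul_cancel_r. apply Nat.pow_nonzero. lia.
Qed.

Lemma gval_some n s σ : decode_str (gval n s) = Some σ ->
  condb n s = true /\ σ = strl Rs (Ks n s) (Nf s (Ks n s)).
Proof.
  unfold gval. destruct (condb n s).
  - rewrite decode_enc. intros H. inversion H. auto.
  - simpl. discriminate.
Qed.

Lemma in_cyl_app l1 l2 X : in_cyl (l1 ++ l2) X -> in_cyl l1 X.
Proof.
  intros H i Hi. rewrite H by (rewrite length_app; lia). apply app_nth1. auto.
Qed.

Lemma nested_g : (forall s, qq s <= qq (S s)) -> nested gval.
Proof.
  intros Hm n X [s Hs]. exists s.
  destruct (decode_str (gval (S n) s)) as [σ'|] eqn:E; [|destruct Hs].
  apply gval_some in E as [H1 H2].
  assert (H3 : condb n s = true).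
  { apply cond_iff in H1 as [H1 H1']. apply cond_iff. split. lia. specialize (Hm n). lra. }
  pose proof (Ks_prop n s H3) as [A1 A2]. pose proof (Ks_prop (S n) s H1) as [B1 B2].
  assert (HK : (Ks n s <= Ks (S n) s)%nat).
  { apply (Kle (qq s - qq (S n)) (qq s - qq n)); auto.
    apply cond_iff in H1. lra. specialize (Hm n). lra. }
  unfold gval. rewrite H3. rewrite decode_enc.
  subst σ'. replace (Ks (S n) s) with (Ks n s + (Ks (S n) s - Ks n s))%nat in Hs by lia.
  destruct (strl_prefix Rs (Ks (S n) s - Ks n s) (Ks n s) (Nf s (Ks n s + (Ks (S n) s - Ks n s))))
    as [rest Hr].
  rewrite Hr, Nf_div in Hs. eapply in_cyl_app. eauto.
Qed.

Lemma sumR_app l1 l2 : sumR (l1 ++ l2) = sumR l1 + sumR l2.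
Proof. induction l1; simpl. lra. unfold sumR in *. simpl. rewrite IHl1. lra. Qed.

Lemma geo : forall len m0,
  fold_right (fun m acc => 2 * / 2 ^ m + acc) 0 (seq m0 len) <= 4 * / 2 ^ m0.
Proof.
  induction len; intros m0; simpl.
  - assert (0 < / 2 ^ m0) by (apply Rinv_0_lt_compat, pow_lt; lra). lra.
  - specialize (IHlen (S m0)). simpl in IHlen.
    rewrite Rinv_mult in IHlen. assert (0 < / 2 ^ m0) by (apply Rinv_0_lt_compat, pow_lt; lra).
    lra.
Qed.

Lemma len_le_L : forall (SS : list (list bool)) σ, In σ SS ->
  (length σ <= fold_right (fun s m => Nat.max (length s) m) 0%nat SS)%nat.
Proof. induction SS; intros σ H; simpl in *. destruct H. destruct H. subst. lia. apply IHSS in H. lia. Qed.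

Lemma Rmax_diff x y : x < y -> 0 <= Rmax 0 y - Rmax 0 x <= y - x.
Proof. intros H. unfold Rmax. destruct (Rle_dec 0 x); destruct (Rle_dec 0 y); lra. Qed.

Lemma measure_g (r : R) n k : infinite_set Rs -> (forall s, qq s <= r) -> qq n < r ->
  measure_fin (stage gval n k) <=
  4 * / 2 ^ (cnt Rs (Z.to_nat (Int_part (- (ln (r - qq n) / ln 2))))).
Proof.
  intros Hinf Hr Hn.
  set (K0 := Z.to_nat (Int_part (- (ln (r - qq n) / ln 2)))).
  pose proof (kfun_prop (r - qq n) ltac:(lra)) as [HK1 HK2]. fold K0 in HK1, HK2.
  set (m0 := cnt Rs K0). set (SS := stage gval n k).
  set (L := fold_right (fun s m => Nat.max (length s) m) 0%nat SS).
  set (tau := fun m e => strl Rs (Jm Rs m) (Nf n (Jm Rs m) + e)).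
  set (U := flat_map (fun m => [tau m 0%nat; tau m 1%nat]) (seq m0 (S L - m0))).
  eapply Rle_trans. apply (MF SS U).
  - intros σ Hσ. pose proof (len_le_L SS σ Hσ) as HL. fold L in HL.
    apply stage_in in Hσ as [s [_ Hs]]. apply gval_some in Hs as [Hc Hσ].
    pose proof (Ks_prop n s Hc) as [A1 A2].
    pose proof (proj1 (cond_iff n s) Hc) as [_ Hqs].
    set (Kv := Ks n s) in *. set (m := cnt Rs Kv).
    assert (Hm0 : (m0 <= m)%nat).
    { apply cnt_mono. apply (Kle (qq s - qq n) (r - qq n)); auto; try lra.
      specialize (Hr s). lra. }
    assert (HmL : (m <= L)%nat) by (rewrite Hσ, strl_length in HL; auto).
    destruct (Jm_spec Rs Hinf m) as [J1 J2]. set (J := Jm Rs m) in *.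
    specialize (J2 Kv eq_refl).
    assert (Hσ' : σ = strl Rs J (Nf s J)).
    { rewrite Hσ. replace Kv with (J + (Kv - J))%nat by lia.
      rewrite strl_same. rewrite Nf_div. auto. replace (J + (Kv - J))%nat with Kv by lia.
      fold m. auto. }
    apply in_flat_map. exists m. split.
    + apply in_seq. lia.
    + destruct A1 as [A1|A1].
      * left. unfold tau. fold J. assert (J = 0%nat) by lia. rewrite Hσ', H. reflexivity.
      * assert (Hd : (qq s - qq n) * 2 ^ J <= 1).
        { eapply Rle_trans; [|apply A1]. apply Rmult_le_compat_l. lra. apply Rle_pow; [lra|lia]. }
        pose proof (Nf_floor s J) as [F1 F2]. pose proof (Nf_floor n J) as [F3 F4].
        pose proof (Rmax_diff _ _ Hqs) as [D1 D2].
        assert (0 < 2 ^ J) by (apply pow_lt; lra).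
        assert (E1 : Rmax 0 (qq n) * 2 ^ J <= Rmax 0 (qq s) * 2 ^ J) by (apply Rmult_le_compat_r; lra).
        assert (E2 : Rmax 0 (qq s) * 2 ^ J <= Rmax 0 (qq n) * 2 ^ J + 1).
        { assert ((Rmax 0 (qq s) - Rmax 0 (qq n)) * 2 ^ J <= (qq s - qq n) * 2 ^ J)
            by (apply Rmult_le_compat_r; lra). lra. }
        assert (G1 : INR (Nf n J) < INR (Nf s J) + 1) by lra.
        assert (G2 : INR (Nf s J) < INR (Nf n J) + 2) by lra.
        rewrite <- S_INR in G1. apply INR_lt in G1.
        replace (INR (Nf n J) + 2) with (INR (S (S (Nf n J)))) in G2 by (rewrite !S_INR; lra).
        apply INR_lt in G2.
        unfold tau. fold J. rewrite Hσ'.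
        destruct (Nat.eq_dec (Nf s J) (Nf n J)) as [E|E].
        -- left. rewrite E, Nat.add_0_r. auto.
        -- right. left. f_equal. lia.
  - assert (Ht : forall m e, length (tau m e) = m).
    { intros m e. unfold tau. rewrite strl_length. apply (Jm_spec Rs Hinf). }
    eapply Rle_trans; [|apply (geo (S L - m0) m0)].
    unfold U. clearbody tau. clear -Ht. induction (seq m0 (S L - m0)) as [|m l IH].
    + simpl. unfold sumR. simpl. lra.
    + simpl flat_map. unfold sumR in *. simpl fold_right in *. rewrite !Ht. lra.
Qed.

Lemma strl_VB (Omega : nat -> bool) : forall K i, (i < length (strl Rs K (VB Omega K)))%nat ->
  nth i (strl Rs K (VB Omega K)) false = Omega (p_R Rs i).
Proof.
  induction K; intros i Hi. simpl in Hi. lia.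
  cbn [strl VB] in *.
  assert (E1 : ((2 * VB Omega K + Nat.b2n (Omega K)) / 2 = VB Omega K)%nat).
  { rewrite Nat.add_comm. apply Nat.add_b2n_double_div2. }
  assert (E2 : Nat.odd (2 * VB Omega K + Nat.b2n (Omega K)) = Omega K).
  { rewrite Nat.add_comm, Nat.odd_add_mul_2. destruct (Omega K); reflexivity. }
  rewrite E1, E2 in *. rewrite length_app in Hi.
  destruct (Nat.lt_ge_cases i (length (strl Rs K (VB Omega K)))).
  - rewrite app_nth1 by auto. apply IHK. auto.
  - destruct (Rs K) eqn:HR; simpl in Hi; [|lia].
    assert (i = length (strl Rs K (VB Omega K))) by lia. subst i.
    rewrite nth_middle. rewrite strl_length, p_R_cnt; auto.
Qed.

Lemma capture_g (Omega : nat -> bool) (r : R) n :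
  real_of_bits Omega r -> (forall N b, exists i, (N <= i)%nat /\ Omega i <> b) ->
  (forall s, qq s <= r) -> qq n < r -> Un_cv qq r ->
  in_V gval n (restrict_seq Rs Omega).
Proof.
  intros Hbits Hne Hr Hn Hcv.
  set (K := Z.to_nat (Int_part (- (ln (r - qq n) / ln 2)))).
  pose proof (kfun_prop (r - qq n) ltac:(lra)) as [HK1 HK2]. fold K in HK1, HK2.
  set (V := VB Omega K).
  pose proof (bits_bounds Omega r Hbits Hne K) as [B1 B2]. fold V in B1, B2.
  assert (P2 : 0 < 2 ^ S K) by (apply pow_lt; lra).
  assert (P1 : 0 < 2 ^ K) by (apply pow_lt; lra).
  set (e2 := r - qq n - / 2 ^ S K).
  assert (He2 : 0 < e2).
  { unfold e2. apply (Rmult_lt_reg_r (2 ^ S K)); auto. rewrite Rmult_minus_distr_r.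
    rewrite Rinv_l by lra. lra. }
  set (e3 := r - INR V / 2 ^ K).
  assert (He3 : 0 < e3) by (unfold e3; lra).
  destruct (Hcv (Rmin e2 e3) ltac:(apply Rmin_pos; lra)) as [N HN].
  set (s := Nat.max N (S n)). specialize (HN s ltac:(lia)).
  unfold Rdist in HN. apply Rabs_def2 in HN as [HN1 HN2].
  pose proof (Rmin_l e2 e3). pose proof (Rmin_r e2 e3).
  assert (Hc : condb n s = true).
  { apply cond_iff. split. lia. unfold e2 in *.
    assert (0 < / 2 ^ S K) by (apply Rinv_0_lt_compat; lra). lra. }
  exists s. unfold gval. rewrite Hc, decode_enc.
  pose proof (Ks_prop n s Hc) as [A1 A2].
  assert (HKs : Ks n s = K).
  { apply Nat.le_antisymm.
    - apply (Kle (qq s - qq n) (qq s - qq n)); auto. apply cond_iff in Hc. lra. lra.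
      apply (Rmult_lt_reg_r (/ 2 ^ S K)). apply Rinv_0_lt_compat; lra.
      rewrite Rmult_assoc, Rinv_r by lra. unfold e2 in *. lra.
    - apply (Kle (qq s - qq n) (r - qq n)); auto. apply cond_iff in Hc. lra.
      specialize (Hr s). lra. }
  rewrite HKs.
  assert (HNf : Nf s K = V).
  { pose proof (Nf_floor s K) as [F1 F2].
    assert (Hqs : INR V / 2 ^ K < qq s) by (unfold e3 in *; lra).
    assert (0 <= INR V / 2 ^ K) by (unfold Rdiv; apply Rmult_le_pos; [apply pos_INR|left; apply Rinv_0_lt_compat; lra]).
    rewrite Rmax_right in F1, F2 by lra.
    assert (INR V < qq s * 2 ^ K).
    { apply (Rmult_lt_compat_r (2 ^ K)) in Hqs; auto. unfold Rdiv in Hqs.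
      rewrite Rmult_assoc, Rinv_l in Hqs by lra. lra. }
    assert (qq s * 2 ^ K < INR V + 1).
    { specialize (Hr s). apply Rle_lt_trans with (r * 2 ^ K).
      apply Rmult_le_compat_r; lra.
      apply (Rmult_lt_compat_r (2 ^ K)) in B2; auto. unfold Rdiv in B2.
      rewrite Rmult_assoc, Rinv_l in B2 by lra. lra. }
    apply int_eq; lra. }
  rewrite HNf. intros i Hi. unfold restrict_seq. symmetry. apply strl_VB. auto.
Qed.

End Main.

Opaque ADD PRED SUB MUL POW2 LE ODD DIV KC STR.

Section GExp.
Variables (pa pb pc pr : prog) (a b c : nat -> nat) (Rs : nat -> bool).
Hypotheses (Ha : forall n, eval pa [n] (a n)) (Hb : forall n, eval pb [n] (b n))
  (Hc : forall n, eval pc [n] (c n))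
  (Hr : forall n, eval pr [n] ((fun n => if Rs n then 1%nat else 0%nat) n)).

Definition Gexp : ex :=
  let An := EExt pa a Ha (EVar 0) in let As := EExt pa a Ha (EVar 1) in
  let Bn := EExt pb b Hb (EVar 0) in let Bs := EExt pb b Hb (EVar 1) in
  let Cne := ESucc (EExt pc c Hc (EVar 0)) in let Cse := ESucc (EExt pc c Hc (EVar 1)) in
  let Xe := EApp2 ADD (EApp2 MUL As Cne) (EApp2 MUL Bn Cse) in
  let Ye := EApp2 ADD (EApp2 MUL An Cse) (EApp2 MUL Bs Cne) in
  let Pe := EApp2 SUB Xe Ye in
  let Qe := EApp2 MUL Cse Cne in
  let KSe := EApp2 KC Pe Qe in
  let NSe := EApp2 DIV (EApp2 MUL (EApp2 SUB As Bs) (EApp1 POW2 KSe)) Cse in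
  let condE := EApp2 MUL (EApp2 LE (ESucc (EVar 0)) (EVar 1)) (EApp2 LE (ESucc Ye) Xe) in
  EApp2 MUL condE (EApp2 (STR pr _ Hr) KSe NSe).

Lemma Gexp_den n s : den Gexp [n; s] = gval a b c Rs n s.
Proof.
  unfold Gexp. cbn [den nth].
  repeat (first [rewrite ADD_ok | rewrite MUL_ok | rewrite SUB_ok | rewrite LE_ok
    | rewrite KC_ok | rewrite POW2_ok | rewrite STR_ok | rewrite DIV_ok by lia]).
  rewrite sci_strl.
  unfold gval, condb, Ks, Nf, Pv, Qv, Xv, Yv, Cn.
  destruct (Nat.leb (S n) s); destruct (Nat.leb _ _); cbn [andb]; lia.
Qed.

Lemma Gexp_comp : computable2 (gval a b c Rs).
Proof.
  exists (compile 2 Gexp). intros n m. rewrite <- Gexp_den. apply compile_ok; reflexivity.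
Qed.
End GExp.

Lemma psum_le_ge h j t : (forall i, 0 <= h i) -> (j < t)%nat -> h j <= psum h t.
Proof.
  intros H0 Hj. pose proof (psum_ge h 0 j t H0 ltac:(lia)). simpl in H. lra.
Qed.

Theorem proposition5p4 :
  forall (Omega : nat -> bool) (r : R) (q : nat -> R),
    real_of_bits Omega r ->
    ML_random Omega ->
    computable_rat_seq q ->
    (forall s, q s <= q (S s)) ->
    Un_cv q r ->
    forall Rs : nat -> bool,
      computable_set Rs -> infinite_set Rs ->
      exists g : nat -> nat -> nat,
        bounded_test (cbar Rs r q) g /\ captures g (restrict_seq Rs Omega).
Proof.
  intros Omega r q Hbits HML Hq Hmono Hcv Rs HRs Hinf.
  destruct Hq as [a [b [c [[pa Ha] [[pb Hb] [[pc Hc] Hqe]]]]]].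
  destruct HRs as [pr Hr].
  assert (Hqq : forall s, q s = qq a b c s) by (intros; rewrite Hqe; reflexivity).
  assert (Hle : forall s, q s <= r) by (apply growing_ineq; auto).
  pose proof (not_ev_const Omega HML) as Hne.
  destruct (Classical_Prop.classic (exists s0, q s0 = r)) as [[s0 Hs0]|Hno].
  -
    set (C := psum (fun i => / cbar Rs r q i) (S s0)).
    assert (Hcb : forall i, 0 < cbar Rs r q i).
    { intros i. unfold cbar. apply Rinv_0_lt_compat, pow_lt. lra. }
    exists (fun _ _ => enc []). split; [split; [|split]|].
    + exists (compile 2 (econst 1)). intros n m. 
      change (enc []) with (den (econst 1) [n; m]). apply compile_ok; reflexivity.
    + intros n X H. exact H.
    + exists C. intros n k. eapply Rle_trans. apply (MF _ [[]]).
      * intros s Hs. apply stage_in in Hs as [j [_ Hj]]. rewrite decode_enc in Hj.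
        inversion Hj. simpl. auto.
      * simpl. unfold sumR. simpl. rewrite Rinv_1, Rplus_0_r.
        assert (Hmin : exists n', (n' <= s0)%nat /\ cbar Rs r q n = cbar Rs r q n').
        { destruct (Nat.le_gt_cases n s0). exists n. auto. exists s0. split; auto.
          assert (q n = q s0).
          { apply Rle_antisym. rewrite Hs0. auto.
            clear -Hmono H. induction H. apply Hmono. specialize (Hmono m). lra. }
          unfold cbar, kfun. rewrite H0. auto. }
        destruct Hmin as [n' [Hn' E]]. rewrite E.
        assert (/ cbar Rs r q n' <= C).
        { unfold C. apply (psum_le_ge (fun i => / cbar Rs r q i)). intros i. left. apply Rinv_0_lt_compat. auto. lia. }
        specialize (Hcb n').
        apply (Rmult_le_compat_r (cbar Rs r q n')) in H; [|lra].
        rewrite Rinv_l in H; lra.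
    + intros n. exists 0%nat. rewrite decode_enc. intros i Hi. simpl in Hi. lia.
  - assert (Hlt : forall s, q s < r).
    { intros s. destruct (Hle s); auto. exfalso. apply Hno. eauto. }
    exists (gval a b c Rs). split; [split; [|split]|].
    + apply (Gexp_comp pa pb pc pr a b c Rs Ha Hb Hc Hr).
    + apply nested_g. intros s. rewrite <- !Hqq. auto.
    + exists 4. intros n k. unfold cbar, kfun. rewrite Hqq.
      apply measure_g; auto.
      * intros s. rewrite <- Hqq. auto.
      * rewrite <- Hqq. auto.
    + intros n. apply capture_g with r; auto.
      * intros s. rewrite <- Hqq. auto.
      * rewrite <- Hqq. auto.
      * intros e He. destruct (Hcv e He) as [N HN]. exists N. intros m Hm.
        rewrite <- Hqq. auto.
Qed.
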